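(* Let $\mathcal{C}$ be a circle and $\mathcal{D}$ a central conic (an ellipse or a hyperbola) such that at least one nondegenerate triangle inscribed in $\mathcal{C}$ is circumscribed about $\mathcal{D}$. Let $\mathcal{P}$ be the family of all nondegenerate triangles inscribed in $\mathcal{C}$ and circumscribed about $\mathcal{D}$. Then $\mathcal{P}$ contains at most two right triangles.
   Context: A central conic is a non-degenerate ellipse (possibly a circle) or hyperbola with a center of symmetry. A triangle is circumscribed about a conic if each of its three sidelines is tangent to the conic. A triangle is inscribed in a circle if its vertices lie on it. A triangle is nondegenerate if its vertices are not collinear. *)

(* Defs.v *)
From Stdlib Require Import Reals.
Open Scope R_scope.

Definition point := (R * R)%type.

Definition px (p : point) : R := fst p.
Definition py (p : point) : R := snd p.

Definition on_circle (o : point) (r : R) (p : point) : Prop :=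
  (px p - px o)^2 + (py p - py o)^2 = r^2.

(* A conic with center (cx,cy) given by the equation
   a u^2 + 2 b u v + d v^2 = 1, where u = x - cx, v = y - cy. *)
Record conic := Conic { cx : R; cy : R; ca : R; cb : R; cd : R }.

Definition conic_form (K : conic) (p : point) : R :=
  let u := px p - cx K in let v := py p - cy K in
  ca K * u^2 + 2 * cb K * u * v + cd K * v^2.

Definition on_conic (K : conic) (p : point) : Prop := conic_form K p = 1.

Definition is_ellipse (K : conic) : Prop :=
  ca K * cd K - cb K ^ 2 > 0 /\ ca K > 0.
Definition is_hyperbola (K : conic) : Prop :=
  ca K * cd K - cb K ^ 2 < 0.
Definition central_conic (K : conic) : Prop := is_ellipse K \/ is_hyperbola K.

(* Gradient of the quadratic form at p (up to the factor 2). *)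
Definition grad_x (K : conic) (p : point) : R :=
  ca K * (px p - cx K) + cb K * (py p - cy K).
Definition grad_y (K : conic) (p : point) : R :=
  cb K * (px p - cx K) + cd K * (py p - cy K).

Definition cross (A B C : point) : R :=
  (px B - px A) * (py C - py A) - (py B - py A) * (px C - px A).

Definition collinear (A B C : point) : Prop := cross A B C = 0.

Definition line_tangent (K : conic) (P Q : point) : Prop :=
  P <> Q /\
  exists T : point, on_conic K T /\ collinear P Q T /\
    grad_x K T * (px Q - px P) + grad_y K T * (py Q - py P) = 0.

Definition nondegenerate (A B C : point) : Prop := ~ collinear A B C.

Definition inscribed_in_circle (o : point) (r : R) (A B C : point) : Prop :=
  on_circle o r A /\ on_circle o r B /\ on_circle o r C.

Definition circumscribed_about (K : conic) (A B C : point) : Prop :=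
  line_tangent K A B /\ line_tangent K B C /\ line_tangent K C A.

Definition poncelet_triangle (o : point) (r : R) (K : conic) (A B C : point)
  : Prop :=
  nondegenerate A B C /\ inscribed_in_circle o r A B C /\
  circumscribed_about K A B C.

Definition dot (A B C : point) : R :=
  (px B - px A) * (px C - px A) + (py B - py A) * (py C - py A).

Definition right_triangle (A B C : point) : Prop :=
  dot A B C = 0 \/ dot B C A = 0 \/ dot C A B = 0.

Definition same_triangle (A B C A' B' C' : point) : Prop :=
  forall X : point, (X = A \/ X = B \/ X = C) <-> (X = A' \/ X = B' \/ X = C').

(* Main.v *)
Require Import Defs.
From Stdlib Require Import Reals Lra Psatz.
Open Scope R_scope.

Lemma sq_zero (x y : R) : x^2 + y^2 = 0 -> x = 0 /\ y = 0.
Proof. intros H. split; nra. Qed.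

Lemma pt_eq (P Q : point) : px P = px Q -> py P = py Q -> P = Q.
Proof. destruct P, Q; unfold px, py; simpl; intros -> ->; reflexivity. Qed.

Lemma vec_nz (P Q : point) : P <> Q -> (px Q - px P)^2 + (py Q - py P)^2 <> 0.
Proof.
  intros Hne Hz. apply sq_zero in Hz as [Z1 Z2]. apply Hne. apply pt_eq; lra.
Qed.

Definition Qr (a b d p1 p2 w1 w2 : R) : R :=
  ((a*p1+b*p2)*w1 + (b*p1+d*p2)*w2)^2
  - (a*w1^2+2*b*w1*w2+d*w2^2)*(a*p1^2+2*b*p1*p2+d*p2^2 - 1).

Lemma Qr_shift a b d p1 p2 w1 w2 s :
  Qr a b d (p1 - s*w1) (p2 - s*w2) w1 w2 = Qr a b d p1 p2 w1 w2.
Proof. unfold Qr. ring. Qed.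

Lemma Qr_neg a b d p1 p2 w1 w2 :
  Qr a b d p1 p2 (-w1) (-w2) = Qr a b d p1 p2 w1 w2.
Proof. unfold Qr. ring. Qed.

Lemma Qr_tangent a b d t1 t2 w1 w2 :
  (a*t1 + b*t2)*w1 + (b*t1+d*t2)*w2 = 0 ->
  a*t1^2+2*b*t1*t2+d*t2^2 = 1 -> Qr a b d t1 t2 w1 w2 = 0.
Proof. intros H H0. unfold Qr. rewrite H, H0. ring. Qed.

Lemma par_raw (w1 w2 d1 d2 : R) : w1^2+w2^2 <> 0 -> w1*d2 - w2*d1 = 0 ->
  exists s, d1 = s*w1 /\ d2 = s*w2.
Proof.
  intros Hn Hc. exists ((d1*w1+d2*w2)/(w1^2+w2^2)). split.
  - assert (E : (d1*w1+d2*w2)/(w1^2+w2^2)*w1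
                = d1 + w2*(w1*d2 - w2*d1)/(w1^2+w2^2)) by (field; auto).
    rewrite E, Hc. unfold Rdiv. ring.
  - assert (E : (d1*w1+d2*w2)/(w1^2+w2^2)*w2
                = d2 - w1*(w1*d2 - w2*d1)/(w1^2+w2^2)) by (field; auto).
    rewrite E, Hc. unfold Rdiv. ring.
Qed.

Definition QK (K : conic) (X P Q : point) : R :=
  Qr (ca K) (cb K) (cd K) (px X - cx K) (py X - cy K) (px Q - px P) (py Q - py P).

Lemma QK_sym K X A B : QK K X A B = QK K X B A.
Proof.
  unfold QK. replace (px A - px B) with (-(px B - px A)) by ring.
  replace (py A - py B) with (-(py B - py A)) by ring. symmetry; apply Qr_neg.
Qed.

Lemma tangent_Q K P Q X : line_tangent K P Q -> cross P Q X = 0 -> QK K X P Q = 0.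
Proof.
  intros [Hne [T [HT [HC Hg]]]] HX.
  unfold on_conic, conic_form in HT; cbv zeta in HT.
  unfold grad_x, grad_y in Hg. unfold collinear, cross in HC, HX.
  assert (Hn := vec_nz P Q Hne).
  assert (Hc : (px Q - px P)*(py T - py X) - (py Q - py P)*(px T - px X) = 0) by lra.
  destruct (par_raw _ _ _ _ Hn Hc) as [s [E1 E2]].
  unfold QK.
  replace (px X - cx K) with ((px T - cx K) - s*(px Q - px P)) by lra.
  replace (py X - cy K) with ((py T - cy K) - s*(py Q - py P)) by lra.
  rewrite Qr_shift. apply Qr_tangent; assumption.
Qed.

Lemma three_core (al be ga x1 y1 x2 y2 x3 y3 : R) :
  al*x1^2 + be*(2*x1*y1) + ga*y1^2 = 0 ->
  al*x2^2 + be*(2*x2*y2) + ga*y2^2 = 0 ->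
  al*x3^2 + be*(2*x3*y3) + ga*y3^2 = 0 ->
  x1*y2 - y1*x2 <> 0 -> x1*y3 - y1*x3 <> 0 -> x2*y3 - y2*x3 <> 0 ->
  al = 0 /\ be = 0 /\ ga = 0.
Proof.
  intros H1 H2 H3 N12 N13 N23.
  set (A1 := x1^2). set (A2 := x2^2). set (A3 := x3^2).
  set (B1 := 2*x1*y1). set (B2 := 2*x2*y2). set (B3 := 2*x3*y3).
  set (C1 := y1^2). set (C2 := y2^2). set (C3 := y3^2).
  assert (HD : A1*(B2*C3 - B3*C2) - A2*(B1*C3 - B3*C1) + A3*(B1*C2 - B2*C1) <> 0).
  { replace (A1*(B2*C3 - B3*C2) - A2*(B1*C3 - B3*C1) + A3*(B1*C2 - B2*C1))
      with (2*(x1*y2 - y1*x2)*(x1*y3 - y1*x3)*(x2*y3 - y2*x3))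
      by (unfold A1, A2, A3, B1, B2, B3, C1, C2, C3; ring).
    repeat apply Rmult_integral_contrapositive_currified; auto; lra. }
  set (D := A1*(B2*C3 - B3*C2) - A2*(B1*C3 - B3*C1) + A3*(B1*C2 - B2*C1)) in HD.
  set (Q1 := al*x1^2 + be*(2*x1*y1) + ga*y1^2) in H1.
  set (Q2 := al*x2^2 + be*(2*x2*y2) + ga*y2^2) in H2.
  set (Q3 := al*x3^2 + be*(2*x3*y3) + ga*y3^2) in H3.
  assert (Ha : al * D = Q1*(B2*C3 - B3*C2) - Q2*(B1*C3 - B3*C1) + Q3*(B1*C2 - B2*C1))
    by (unfold D, Q1, Q2, Q3, A1, A2, A3, B1, B2, B3, C1, C2, C3; ring).
  assert (Hb : be * D = - Q1*(A2*C3 - A3*C2) + Q2*(A1*C3 - A3*C1) - Q3*(A1*C2 - A2*C1))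
    by (unfold D, Q1, Q2, Q3, A1, A2, A3, B1, B2, B3, C1, C2, C3; ring).
  assert (Hg : ga * D = Q1*(A2*B3 - A3*B2) - Q2*(A1*B3 - A3*B1) + Q3*(A1*B2 - A2*B1))
    by (unfold D, Q1, Q2, Q3, A1, A2, A3, B1, B2, B3, C1, C2, C3; ring).
  rewrite H1, H2, H3 in Ha, Hb, Hg.
  repeat split.
  - apply (Rmult_eq_reg_r D); [lra | exact HD].
  - apply (Rmult_eq_reg_r D); [lra | exact HD].
  - apply (Rmult_eq_reg_r D); [lra | exact HD].
Qed.

Lemma fc (a b d u1 u2 k : R) : a*d - b^2 <> 0 ->
  u1^2 - k*a = 0 -> u1*u2 - k*b = 0 -> u2^2 - k*d = 0 -> k = 0 /\ u1 = 0 /\ u2 = 0.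
Proof.
  intros Hd H1 H2 H3.
  assert (ka : k*a = u1^2) by lra. assert (kb : k*b = u1*u2) by lra.
  assert (kd : k*d = u2^2) by lra.
  assert (E : (k*k)*(a*d - b^2) = 0).
  { replace ((k*k)*(a*d - b^2)) with ((k*a)*(k*d) - (k*b)*(k*b)) by ring.
    rewrite ka, kb, kd. ring. }
  apply Rmult_integral in E as [E|E]; [|contradiction].
  apply Rmult_integral in E as [E|E]; subst k; split; auto; split; nra.
Qed.

Lemma three_raw a b d p1 p2 x1 y1 x2 y2 x3 y3 :
  a*d - b^2 <> 0 ->
  Qr a b d p1 p2 x1 y1 = 0 -> Qr a b d p1 p2 x2 y2 = 0 -> Qr a b d p1 p2 x3 y3 = 0 ->
  x1*y2 - y1*x2 = 0 \/ x1*y3 - y1*x3 = 0 \/ x2*y3 - y2*x3 = 0.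
Proof.
  intros Hdet H1 H2 H3.
  destruct (Req_dec (x1*y2 - y1*x2) 0) as [?|N12]; [auto|].
  destruct (Req_dec (x1*y3 - y1*x3) 0) as [?|N13]; [auto|].
  destruct (Req_dec (x2*y3 - y2*x3) 0) as [?|N23]; [auto|].
  exfalso.
  set (u1 := a*p1+b*p2). set (u2 := b*p1+d*p2). set (k := a*p1^2+2*b*p1*p2+d*p2^2 - 1).
  assert (G1 : (u1^2 - k*a)*x1^2 + (u1*u2 - k*b)*(2*x1*y1) + (u2^2 - k*d)*y1^2 = 0)
    by (rewrite <- H1; unfold Qr, u1, u2, k; ring).
  assert (G2 : (u1^2 - k*a)*x2^2 + (u1*u2 - k*b)*(2*x2*y2) + (u2^2 - k*d)*y2^2 = 0)
    by (rewrite <- H2; unfold Qr, u1, u2, k; ring).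
  assert (G3 : (u1^2 - k*a)*x3^2 + (u1*u2 - k*b)*(2*x3*y3) + (u2^2 - k*d)*y3^2 = 0)
    by (rewrite <- H3; unfold Qr, u1, u2, k; ring).
  destruct (three_core _ _ _ _ _ _ _ _ _ G1 G2 G3 N12 N13 N23) as [Ha [Hb Hg]].
  destruct (fc a b d u1 u2 k Hdet Ha Hb Hg) as [Hk [Hu1 Hu2]].
  assert (E : k = p1*u1 + p2*u2 - 1) by (unfold k, u1, u2; ring).
  rewrite Hk, Hu1, Hu2 in E. lra.
Qed.

Lemma thales_raw a1 a2 b1 b2 c1 c2 :
  a1^2+a2^2 = b1^2+b2^2 -> c1^2+c2^2 = b1^2+b2^2 ->
  (b1-a1)*(c1-a1)+(b2-a2)*(c2-a2) = 0 ->
  (b1-a1)*(c2-a2) - (b2-a2)*(c1-a1) <> 0 -> b1+c1 = 0 /\ b2+c2 = 0.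
Proof.
  intros Ha Hc Hd Hn.
  assert (Hx : (b1+c1)*(2*a1-(b1+c1)) + (b2+c2)*(2*a2-(b2+c2)) = 0) by lra.
  assert (Hy : (b1+c1)*(c1-b1) + (b2+c2)*(c2-b2) = 0) by lra.
  assert (E1 : (b1+c1) * ((b1-a1)*(c2-a2) - (b2-a2)*(c1-a1)) =
     -(1/2)*((c2-b2)*((b1+c1)*(2*a1-(b1+c1)) + (b2+c2)*(2*a2-(b2+c2)))
             - (2*a2-(b2+c2))*((b1+c1)*(c1-b1) + (b2+c2)*(c2-b2)))) by field.
  assert (E2 : (b2+c2) * ((b1-a1)*(c2-a2) - (b2-a2)*(c1-a1)) =
     -(1/2)*((2*a1-(b1+c1))*((b1+c1)*(c1-b1) + (b2+c2)*(c2-b2))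
             - (c1-b1)*((b1+c1)*(2*a1-(b1+c1)) + (b2+c2)*(2*a2-(b2+c2))))) by field.
  rewrite Hx, Hy in E1, E2.
  assert (F1 : (b1+c1) * ((b1-a1)*(c2-a2) - (b2-a2)*(c1-a1)) = 0) by (rewrite E1; ring).
  assert (F2 : (b2+c2) * ((b1-a1)*(c2-a2) - (b2-a2)*(c1-a1)) = 0) by (rewrite E2; ring).
  apply Rmult_integral in F1 as [F1|F1]; [|contradiction].
  apply Rmult_integral in F2 as [F2|F2]; [|contradiction].
  auto.
Qed.

Lemma circ_raw e1 e2 u1 u2 v1 v2 :
  2*(e1*u1+e2*u2) + (u1^2+u2^2) = 0 -> 2*(e1*v1+e2*v2) + (v1^2+v2^2) = 0 ->
  u1*v2 - u2*v1 = 0 -> u1^2+u2^2 <> 0 -> v1^2+v2^2 <> 0 -> v1 = u1 /\ v2 = u2.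
Proof.
  intros Hu Hv Hc Nu Nv.
  destruct (par_raw u1 u2 v1 v2 Nu Hc) as [t [E1 E2]]. subst v1 v2.
  assert (E : t*(t-1)*(u1^2+u2^2) =
     (2*(e1*(t*u1)+e2*(t*u2)) + ((t*u1)^2+(t*u2)^2)) - t*(2*(e1*u1+e2*u2) + (u1^2+u2^2)))
    by ring.
  rewrite Hu, Hv in E.
  assert (F : t*(t-1)*(u1^2+u2^2) = 0) by (rewrite E; ring).
  apply Rmult_integral in F as [F|F]; [|contradiction].
  apply Rmult_integral in F as [F|F].
  - subst t. exfalso. apply Nv. ring.
  - assert (t = 1) by lra. subst t. split; ring.
Qed.

Lemma anti_raw h1 h2 v1 v2 : v1^2+v2^2 = h1^2+h2^2 -> h1*v2 - h2*v1 = 0 ->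
  (v1 = h1 /\ v2 = h2) \/ (v1 = -h1 /\ v2 = -h2).
Proof.
  intros Hn Hc.
  assert (E : ((v1-h1)^2+(v2-h2)^2)*((v1+h1)^2+(v2+h2)^2)
              = ((v1^2+v2^2) - (h1^2+h2^2))^2 + (2*(h1*v2 - h2*v1))^2) by ring.
  rewrite Hn, Hc in E.
  assert (F : ((v1-h1)^2+(v2-h2)^2)*((v1+h1)^2+(v2+h2)^2) = 0) by (rewrite E; ring).
  apply Rmult_integral in F as [F|F]; apply sq_zero in F as [F1 F2].
  - left; split; lra.
  - right; split; lra.
Qed.

Lemma det_nz K : central_conic K -> ca K * cd K - cb K ^ 2 <> 0.
Proof. unfold central_conic, is_ellipse, is_hyperbola. intros [[H _]|H]; lra. Qed.

Lemma cross_rot A B C : cross B C A = cross A B C.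
Proof. unfold cross. ring. Qed.
Lemma cross_swap A B C : cross B A C = - cross A B C.
Proof. unfold cross. ring. Qed.

Lemma thales o r A B C : on_circle o r A -> on_circle o r B -> on_circle o r C ->
  dot A B C = 0 -> ~ collinear A B C ->
  px B + px C = 2 * px o /\ py B + py C = 2 * py o.
Proof.
  unfold on_circle, dot, collinear, cross. intros HA HB HC Hd Hn.
  destruct (thales_raw (px A - px o) (py A - py o) (px B - px o) (py B - py o)
     (px C - px o) (py C - py o)) as [E1 E2].
  - lra.
  - lra.
  - lra.
  - intro Hc; apply Hn; lra.
  - split; lra.
Qed.

Lemma key o r K P Q R R' : central_conic K ->
  on_circle o r P -> on_circle o r R -> on_circle o r R' ->
  cross P Q R <> 0 -> cross P Q R' <> 0 ->
  QK K P P Q = 0 -> QK K P R P = 0 -> QK K P R' P = 0 -> R = R'.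
Proof.
  intros Hk HP HR HR' N1 N2 H1 H2 H3.
  unfold QK in H1, H2, H3.
  destruct (three_raw _ _ _ _ _ _ _ _ _ _ _ (det_nz K Hk) H1 H2 H3) as [C|[C|C]].
  - exfalso; apply N1; unfold cross; lra.
  - exfalso; apply N2; unfold cross; lra.
  - unfold on_circle in *.
    destruct (circ_raw (px P - px o) (py P - py o) (px R - px P) (py R - py P)
                (px R' - px P) (py R' - py P)) as [E1 E2].
    + lra.
    + lra.
    + lra.
    + intro Hz. apply sq_zero in Hz as [Z1 Z2]. apply N1. unfold cross.
      rewrite Z1, Z2. ring.
    + intro Hz. apply sq_zero in Hz as [Z1 Z2]. apply N2. unfold cross.
      rewrite Z1, Z2. ring.
    + apply pt_eq; lra.
Qed.

Lemma cross_self1 A B : cross A B A = 0.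
Proof. unfold cross. ring. Qed.
Lemma cross_self2 A B : cross A B B = 0.
Proof. unfold cross. ring. Qed.

Lemma same_hyp o r K P Q R P' Q' R' : central_conic K ->
  poncelet_triangle o r K P Q R -> px P + px Q = 2 * px o -> py P + py Q = 2 * py o ->
  poncelet_triangle o r K P' Q' R' -> px P' + px Q' = 2 * px o -> py P' + py Q' = 2 * py o ->
  (px Q - px P)*(py Q' - py P') - (py Q - py P)*(px Q' - px P') = 0 ->
  same_triangle P Q R P' Q' R'.
Proof.
  intros Hk [Hnd [[HP [HQ HR]] [T1 [T2 T3]]]] Ex Ey
    [Hnd' [[HP' [HQ' HR']] [T1' [T2' T3']]]] Ex' Ey' Hw.
  destruct (anti_raw (px Q - px o) (py Q - py o) (px P' - px o) (py P' - py o)) as [[F1 F2]|[F1 F2]].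
  - unfold on_circle in *. lra.
  - assert (G1 : px Q - px o = (px Q - px P)/2) by lra.
    assert (G2 : py Q - py o = (py Q - py P)/2) by lra.
    assert (G3 : px P' - px o = -(px Q' - px P')/2) by lra.
    assert (G4 : py P' - py o = -(py Q' - py P')/2) by lra.
    rewrite G1, G2, G3, G4. lra.
  - assert (P' = Q) by (apply pt_eq; lra). subst P'.
    assert (Q' = P) by (apply pt_eq; lra). subst Q'.
    assert (R = R').
    { apply (key o r K P Q R R' Hk HP HR HR').
      - exact Hnd.
      - intro Hc; apply Hnd'. unfold collinear, cross in *. lra.
      - apply tangent_Q; [exact T1 | apply cross_self1].
      - apply tangent_Q; [exact T3 | apply cross_self2].
      - rewrite QK_sym. apply tangent_Q; [exact T2' | apply cross_self1]. }
    subst R'. intro X. tauto.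
  - assert (P' = P) by (apply pt_eq; lra). subst P'.
    assert (Q' = Q) by (apply pt_eq; lra). subst Q'.
    assert (R = R').
    { apply (key o r K P Q R R' Hk HP HR HR').
      - exact Hnd.
      - exact Hnd'.
      - apply tangent_Q; [exact T1 | apply cross_self1].
      - apply tangent_Q; [exact T3 | apply cross_self2].
      - apply tangent_Q; [exact T3' | apply cross_self2]. }
    subst R'. intro X. tauto.
Qed.

Lemma norm o r K A B C : poncelet_triangle o r K A B C -> right_triangle A B C ->
  exists P Q R, same_triangle A B C P Q R /\ poncelet_triangle o r K P Q R /\
    px P + px Q = 2 * px o /\ py P + py Q = 2 * py o.
Proof.
  intros [Hnd [[HA [HB HC]] [T1 [T2 T3]]]] [H|[H|H]].
  - destruct (thales o r A B C HA HB HC H Hnd) as [E1 E2].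
    exists B, C, A.
    refine (conj _ (conj (conj _ (conj (conj HB (conj HC HA)) (conj T2 (conj T3 T1)))) (conj E1 E2))).
    + intro X; tauto.
    + unfold nondegenerate, collinear; rewrite cross_rot; exact Hnd.
  - assert (Hn : ~ collinear B C A) by (unfold collinear; rewrite cross_rot; exact Hnd).
    destruct (thales o r B C A HB HC HA H Hn) as [E1 E2].
    exists C, A, B.
    refine (conj _ (conj (conj _ (conj (conj HC (conj HA HB)) (conj T3 (conj T1 T2)))) (conj E1 E2))).
    + intro X; tauto.
    + unfold nondegenerate, collinear; rewrite cross_rot, cross_rot; exact Hnd.
  - assert (Hn : ~ collinear C A B) by (unfold collinear; rewrite cross_rot, cross_rot; exact Hnd).
    destruct (thales o r C A B HC HA HB H Hn) as [E1 E2].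
    exists A, B, C.
    refine (conj _ (conj (conj Hnd (conj (conj HA (conj HB HC)) (conj T1 (conj T2 T3)))) (conj E1 E2))).
    intro X; tauto.
Qed.

Lemma st_trans A B C D E F G H I : same_triangle A B C D E F ->
  same_triangle D E F G H I -> same_triangle A B C G H I.
Proof. intros H1 H2 X. exact (iff_trans (H1 X) (H2 X)). Qed.
Lemma st_sym A B C D E F : same_triangle A B C D E F -> same_triangle D E F A B C.
Proof. intros H1 X. exact (iff_sym (H1 X)). Qed.

Lemma hyp_o o r K P Q R : poncelet_triangle o r K P Q R ->
  px P + px Q = 2 * px o -> py P + py Q = 2 * py o -> QK K o P Q = 0.
Proof.
  intros [_ [_ [T1 _]]] Ex Ey. apply tangent_Q; [exact T1|].
  unfold cross.
  replace (px o) with ((px P + px Q)/2) by lra.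
  replace (py o) with ((py P + py Q)/2) by lra. field.
Qed.

Theorem proposition2p1 (o : point) (r : R) (K : conic) :
  r > 0 ->
  central_conic K ->
  (exists A B C : point, poncelet_triangle o r K A B C) ->
  forall A1 B1 C1 A2 B2 C2 A3 B3 C3 : point,
    poncelet_triangle o r K A1 B1 C1 -> right_triangle A1 B1 C1 ->
    poncelet_triangle o r K A2 B2 C2 -> right_triangle A2 B2 C2 ->
    poncelet_triangle o r K A3 B3 C3 -> right_triangle A3 B3 C3 ->
    same_triangle A1 B1 C1 A2 B2 C2 \/
    same_triangle A1 B1 C1 A3 B3 C3 \/
    same_triangle A2 B2 C2 A3 B3 C3.
Proof.
  intros _ Hk _ A1 B1 C1 A2 B2 C2 A3 B3 C3 H1 R1 H2 R2 H3 R3.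
  destruct (norm o r K A1 B1 C1 H1 R1) as (P1 & Q1 & S1 & St1 & N1 & X1 & Y1).
  destruct (norm o r K A2 B2 C2 H2 R2) as (P2 & Q2 & S2 & St2 & N2 & X2 & Y2).
  destruct (norm o r K A3 B3 C3 H3 R3) as (P3 & Q3 & S3 & St3 & N3 & X3 & Y3).
  pose proof (hyp_o o r K P1 Q1 S1 N1 X1 Y1) as G1.
  pose proof (hyp_o o r K P2 Q2 S2 N2 X2 Y2) as G2.
  pose proof (hyp_o o r K P3 Q3 S3 N3 X3 Y3) as G3.
  unfold QK in G1, G2, G3.
  destruct (three_raw _ _ _ _ _ _ _ _ _ _ _ (det_nz K Hk) G1 G2 G3) as [C|[C|C]].
  - left. eapply st_trans; [exact St1|]. eapply st_trans; [|apply st_sym; exact St2].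
    eapply same_hyp; eauto.
  - right; left. eapply st_trans; [exact St1|]. eapply st_trans; [|apply st_sym; exact St3].
    eapply same_hyp; eauto.
  - right; right. eapply st_trans; [exact St2|]. eapply st_trans; [|apply st_sym; exact St3].
    eapply same_hyp; eauto.
Qed.
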